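(* Let $\alpha\in\{1,2,3\}$, let $T_0\in\mathcal{T}(\mathbb{R}^2)$ with $T_0\subset\Sigma^\alpha$ have vertices $i_0\in\mathcal{L}^1$, $j_0\in\mathcal{L}^2$, $k_0\in\mathcal{L}^3$, let $u\colon\mathcal{L}\to\mathcal{S}^1$, and let $\theta(i_0)\in\mathbb{R}$, $\theta(j_0)\in[\theta(i_0)-\pi,\theta(i_0)+\pi)$, $\theta(k_0)\in[\theta(j_0)-\pi,\theta(j_0)+\pi)$ satisfy $u(p_0)=e^{\iota\theta(p_0)}$ for $p\in\{i,j,k\}$ and $$\Big|\theta(j_0)-\theta(i_0)-\tfrac{2\pi}{3}\Big|\le\tfrac14,\qquad\Big|\theta(k_0)-\theta(j_0)-\tfrac{2\pi}{3}\Big|\le\tfrac14 .$$ Let $N\ge1$ and $m\ge0$ be integers with $2\pi m\ge|\theta(i_0)|+2\pi$, and let $u^{N,m}$ be the interpolation defined below. Then there is a constant $C>0$ independent of $N$ and $m$ such that $$F_1(u^{N,m},\Sigma^\alpha(T_0))\le C\Big(N\,F_1(u,T_0)+\frac{m^2}{N}\Big).$$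
   Context: Lattice: $\hat e_1=(1,0)$, $\hat e_2=\tfrac12(1,\sqrt3)$, $\hat e_3=\tfrac12(-1,\sqrt3)$, $\mathcal{L}=\{z_1\hat e_1+z_2\hat e_2\colon z\in\mathbb{Z}^2\}$, $\mathcal{L}^1=\{z_1(\hat e_1+\hat e_2)+z_2(\hat e_2+\hat e_3)\colon z\in\mathbb{Z}^2\}$, $\mathcal{L}^2=\mathcal{L}^1+\hat e_1$, $\mathcal{L}^3=\mathcal{L}^1+\hat e_2$. $\mathcal{T}(\mathbb{R}^2)$: closed triangles $\mathrm{conv}\{i,j,k\}$, $i,j,k\in\mathcal L$ pairwise at distance 1, labelled $i\in\mathcal{L}^1,j\in\mathcal{L}^2,k\in\mathcal{L}^3$. Unit circle $\mathcal S^1$ identified with unit complex numbers. For $v:\mathcal L\to\mathcal S^1$ (possibly only defined on the vertices involved) and a set $A$, $F_1(v,T)=|v(i)+v(j)+v(k)|^2$ and $F_1(v,A)=\sum_{T\in\mathcal T(\mathbb{R}^2),\,T\subset A}F_1(v,T)$. For $w\in\mathbb{R}^2$, $w^\perp=(-w_2,w_1)$. Slice: $\Sigma^\alpha=\{s\hat e_\alpha+t\hat e_\alpha^\perp\colon s\in\mathbb{R},\ t\in[0,\tfrac{\sqrt3}{2}]\}$; for a triangle in $\Sigma^\alpha$ each vertex $p$ satisfies $\langle p,\hat e_\alpha^\perp\rangle\in\{0,\tfrac{\sqrt3}2\}$. Set $\tau(0)=1$, $\tau(\tfrac{\sqrt3}2)=-1$, and recursively for $h\in\mathbb{N}$ and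 $p\in\{i,j,k\}$: $p_{h+1}=p_h+\tfrac32\hat e_\alpha+\tau(\langle p_h,\hat e_\alpha^\perp\rangle)\tfrac{\sqrt3}{2}\hat e_\alpha^\perp$, $T_h=\mathrm{conv}\{i_h,j_h,k_h\}\subset\Sigma^\alpha$, and $\Sigma^\alpha(T_0)=\mathrm{conv}\{T_h\colon h\in\mathbb{N}\}$. Interpolated angles: for $h=0,\dots,N$, $\theta(i_h)=(1-\tfrac hN)\theta(i_0)+\tfrac hN2\pi m$, $\theta(j_h)=(1-\tfrac hN)\theta(j_0)+\tfrac hN2\pi m+\tfrac hN\tfrac{2\pi}3$, $\theta(k_h)=(1-\tfrac hN)\theta(k_0)+\tfrac hN2\pi m+\tfrac hN\tfrac{4\pi}3$; for $h\ge N+1$, $\theta(i_h)=2\pi m$, $\theta(j_h)=2\pi m+\tfrac{2\pi}3$, $\theta(k_h)=2\pi m+\tfrac{4\pi}3$. The interpolation $u^{N,m}\colon\mathcal{L}\cap\Sigma^\alpha(T_0)\to\mathcal{S}^1$ is $u^{N,m}(p_h)=e^{\iota\theta(p_h)}$ for $p\in\{i,j,k\}$, $h\in\mathbb N$. *)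

(* Defs.v *)
From HB Require Import structures.
From mathcomp Require Import all_boot all_order all_algebra.
From mathcomp Require Import all_classical all_reals all_analysis.
Set Implicit Arguments. Unset Strict Implicit. Unset Printing Implicit Defensive.
Import Order.TTheory GRing.Theory Num.Theory.
Local Open Scope classical_set_scope.
Local Open Scope ring_scope.

Section Defs.
Variable R : realType.

Definition pt := (R * R)%type.
Definition padd (p q : pt) : pt := (p.1 + q.1, p.2 + q.2).
Definition pscale (a : R) (p : pt) : pt := (a * p.1, a * p.2).
Definition inner (p q : pt) : R := p.1 * q.1 + p.2 * q.2.
Definition perp (w : pt) : pt := (- w.2, w.1).
Definition dist (p q : pt) : R := Num.sqrt ((p.1 - q.1) ^+ 2 + (p.2 - q.2) ^+ 2).

Definition sqrt3 : R := Num.sqrt 3.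
Definition e1 : pt := (1, 0).
Definition e2 : pt := (1 / 2, sqrt3 / 2).
Definition e3 : pt := (- (1 / 2), sqrt3 / 2).
Definition ehat (a : nat) : pt := if a == 1%N then e1 else if a == 2%N then e2 else e3.

Definition onL (p : pt) : Prop :=
  exists z1 z2 : int, p = padd (pscale z1%:~R e1) (pscale z2%:~R e2).
Definition onL1 (p : pt) : Prop :=
  exists z1 z2 : int, p = padd (pscale z1%:~R (padd e1 e2)) (pscale z2%:~R (padd e2 e3)).
Definition onL2 (p : pt) : Prop := exists q, onL1 q /\ p = padd q e1.
Definition onL3 (p : pt) : Prop := exists q, onL1 q /\ p = padd q e2.

Definition convex_set (C : set pt) : Prop :=
  forall x y t, C x -> C y -> 0 <= t <= 1 ->
    C (padd (pscale t x) (pscale (1 - t) y)).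
Definition conv (S : set pt) : set pt :=
  [set x | forall C, convex_set C -> S `<=` C -> C x].

(* labelled triangles of T(R^2): triples (i,j,k), i in L^1, j in L^2, k in L^3,
   pairwise at distance 1; the triangle itself is conv{i,j,k} *)
Definition tri := (pt * pt * pt)%type.
Definition tri_i (t : tri) : pt := t.1.1.
Definition tri_j (t : tri) : pt := t.1.2.
Definition tri_k (t : tri) : pt := t.2.
Definition is_tri (t : tri) : Prop :=
  [/\ onL1 (tri_i t), onL2 (tri_j t) & onL3 (tri_k t)] /\
  [/\ dist (tri_i t) (tri_j t) = 1, dist (tri_j t) (tri_k t) = 1 &
      dist (tri_i t) (tri_k t) = 1].
Definition tri_set (t : tri) : set pt := conv [set tri_i t; tri_j t; tri_k t].

(* unit complex numbers, represented as points of R^2 = C *)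
Definition on_S1 (z : pt) : Prop := z.1 ^+ 2 + z.2 ^+ 2 = 1.
Definition expi (th : R) : pt := (cos th, sin th).
Definition sqnorm (z : pt) : R := z.1 ^+ 2 + z.2 ^+ 2.

Definition F1tri (v : pt -> pt) (t : tri) : R :=
  sqnorm (padd (padd (v (tri_i t)) (v (tri_j t))) (v (tri_k t))).
(* F_1(v,A) = sum over triangles T in T(R^2) with T subset A (possibly infinite
   sum of nonnegative terms, taken in the extended reals) *)
Definition F1 (v : pt -> pt) (A : set pt) : \bar R :=
  \esum_(t in [set t | is_tri t /\ tri_set t `<=` A]) (F1tri v t)%:E.

Definition Sigma (a : nat) : set pt :=
  [set x | exists s t : R, 0 <= t <= sqrt3 / 2 /\
     x = padd (pscale s (ehat a)) (pscale t (perp (ehat a)))].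

Definition tau (t : R) : R := if t == 0 then 1 else -1.
Definition pstep (a : nat) (p : pt) : pt :=
  padd p (padd (pscale (3 / 2) (ehat a))
               (pscale (tau (inner p (perp (ehat a))) * (sqrt3 / 2)) (perp (ehat a)))).
Definition piter (a : nat) (h : nat) (p : pt) : pt := iter h (pstep a) p.

Definition T_h (a : nat) (i0 j0 k0 : pt) (h : nat) : set pt :=
  conv [set piter a h i0; piter a h j0; piter a h k0].
Definition SigmaT0 (a : nat) (i0 j0 k0 : pt) : set pt :=
  conv (\bigcup_(h in [set: nat]) T_h a i0 j0 k0 h).

(* interpolated angles: c = 0, 2pi/3, 4pi/3 for p = i, j, k *)
Definition theta_interp (N m : nat) (th0 c : R) (h : nat) : R :=
  if (h <= N)%N then
    (1 - h%:R / N%:R) * th0 + h%:R / N%:R * (2 * pi * m%:R) + h%:R / N%:R * c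
  else 2 * pi * m%:R + c.

Definition is_interp (a : nat) (i0 j0 k0 : pt) (thi thj thk : R) (N m : nat)
    (v : pt -> pt) : Prop :=
  forall h : nat,
    [/\ v (piter a h i0) = expi (theta_interp N m thi 0 h),
        v (piter a h j0) = expi (theta_interp N m thj (2 * pi / 3) h) &
        v (piter a h k0) = expi (theta_interp N m thk (4 * pi / 3) h)].

End Defs.

(* Main.v *)
Require Import Defs.
From HB Require Import structures.
From mathcomp Require Import all_boot all_order all_algebra.
From mathcomp Require Import all_classical all_reals all_analysis.
From mathcomp Require Import zify ring lra.
Import Order.TTheory GRing.Theory Num.Theory.
Import numFieldNormedType.Exports.
Local Open Scope classical_set_scope.
Local Open Scope ring_scope.


Section Geo.
Variable R : realType.
Implicit Types (p q x : pt R).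

Lemma sqrt3_sq : sqrt3 R ^+ 2 = 3.
Proof. by rewrite /sqrt3 sqr_sqrtr // ler0n. Qed.
Lemma sqrt3_gt0 : 0 < sqrt3 R.
Proof. by rewrite /sqrt3 sqrtr_gt0 ltr0n. Qed.

Variable a : nat.
Hypothesis ha : (1 <= a <= 3)%N.

Definition sc x := inner x (ehat R a).
Definition tc x := inner x (perp (ehat R a)).

Lemma e_unit : (ehat R a).1 ^+ 2 + (ehat R a).2 ^+ 2 = 1.
Proof.
have h := sqrt3_sq.
move: ha; rewrite /ehat /e1 /e2 /e3.
case: a => [|[|[|[|n]]]] //= _; nra.
Qed.

Lemma p1E p : p.1 = (ehat R a).1 * sc p - (ehat R a).2 * tc p.
Proof.
rewrite /sc /tc /inner /perp /=.
transitivity (p.1 * ((ehat R a).1 ^+ 2 + (ehat R a).2 ^+ 2)); first by rewrite e_unit mulr1.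
ring.
Qed.

Lemma p2E p : p.2 = (ehat R a).2 * sc p + (ehat R a).1 * tc p.
Proof.
rewrite /sc /tc /inner /perp /=.
transitivity (p.2 * ((ehat R a).1 ^+ 2 + (ehat R a).2 ^+ 2)); first by rewrite e_unit mulr1.
ring.
Qed.

Lemma eq_coords p q : sc p = sc q -> tc p = tc q -> p = q.
Proof.
move=> hs ht; rewrite (surjective_pairing p) (surjective_pairing q).
by rewrite (p1E p) (p2E p) (p1E q) (p2E q) hs ht.
Qed.

Lemma sc_add p q : sc (padd p q) = sc p + sc q.
Proof. rewrite /sc /inner /padd /=; ring. Qed.
Lemma tc_add p q : tc (padd p q) = tc p + tc q.
Proof. rewrite /tc /inner /padd /=; ring. Qed.
Lemma sc_scale c p : sc (pscale c p) = c * sc p.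
Proof. rewrite /sc /inner /pscale /=; ring. Qed.
Lemma tc_scale c p : tc (pscale c p) = c * tc p.
Proof. rewrite /tc /inner /pscale /=; ring. Qed.
Lemma sc_e : sc (ehat R a) = 1.
Proof. by rewrite /sc /inner -e_unit /=; rewrite !expr2. Qed.
Lemma tc_e : tc (ehat R a) = 0.
Proof. rewrite /tc /inner /perp /=; ring. Qed.
Lemma sc_f : sc (perp (ehat R a)) = 0.
Proof. rewrite /sc /inner /perp /=; ring. Qed.
Lemma tc_f : tc (perp (ehat R a)) = 1.
Proof. by rewrite /tc /inner /perp /= -e_unit !expr2; ring. Qed.

Lemma sc_pstep p : sc (pstep a p) = sc p + 3 / 2.
Proof. by rewrite /pstep !sc_add !sc_scale sc_e sc_f; ring. Qed.
Lemma tc_pstep p : tc (pstep a p) = tc p + tau (tc p) * (sqrt3 R / 2).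
Proof. rewrite /pstep !tc_add !tc_scale tc_e tc_f -/(tc p); ring. Qed.

Lemma Sigma_tc x : Sigma a x -> 0 <= tc x <= sqrt3 R / 2.
Proof.
case=> s [t [ht ->]].
by rewrite tc_add !tc_scale tc_e tc_f mulr0 mulr1 add0r.
Qed.

Lemma dist_coords p q : dist p q = 1 -> (sc p - sc q) ^+ 2 + (tc p - tc q) ^+ 2 = 1.
Proof.
rewrite /dist => h.
have -> : (sc p - sc q) ^+ 2 + (tc p - tc q) ^+ 2 =
   ((p.1 - q.1) ^+ 2 + (p.2 - q.2) ^+ 2) * ((ehat R a).1 ^+ 2 + (ehat R a).2 ^+ 2).
  rewrite /sc /tc /inner /perp /=; ring.
rewrite e_unit mulr1 -(@sqr_sqrtr _ ((p.1 - q.1) ^+ 2 + (p.2 - q.2) ^+ 2)) ?h ?expr1n //.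
by rewrite addr_ge0 // sqr_ge0.
Qed.


Notation w := (sqrt3 R / 2).

Lemma w_gt0 : 0 < w.
Proof. by rewrite divr_gt0 // sqrt3_gt0. Qed.

Lemma piter_coords p h : tc p = 0 \/ tc p = w ->
  sc (piter a h p) = sc p + 3 / 2 * h%:R /\
  tc (piter a h p) = if odd h then w - tc p else tc p.
Proof.
move=> hp; have wp := w_gt0.
elim: h => [|h [IHs IHt]]; first by rewrite /= mulr0 addr0.
rewrite /piter iterS -/(piter a h p) sc_pstep tc_pstep IHs IHt; split.
  by rewrite -addn1 natrD; ring.
rewrite /tau /=; case: (odd h) => /=; case: hp => ->.
- by rewrite subr0 gt_eqF //; ring.
- by rewrite subrr eqxx; ring.
- by rewrite eqxx; ring.
- by rewrite gt_eqF //; ring.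
Qed.

Lemma L1_coords x : onL1 x -> exists m k : int,
  sc x = 3 / 2 * m%:~R /\ tc x = w * (m%:~R + 2 * k%:~R).
Proof.
case=> z1 [z2 ->].
have h1 : (z1%:~R : R) * (sqrt3 R ^+ 2 - 3) = 0 by rewrite sqrt3_sq subrr mulr0.
have h2 : (z2%:~R : R) * (sqrt3 R ^+ 2 - 3) = 0 by rewrite sqrt3_sq subrr mulr0.
move: ha; rewrite /sc /tc /inner /perp /padd /pscale /ehat /e1 /e2 /e3 /=.
case: a => [|[|[|[|n]]]] //= _.
- by exists z1, z2; split; field.
- exists (z1 + z2), (- z1); rewrite !rmorphD !rmorphN /=; split; last by field.
  lra.
- exists z2, (- z1 - z2); rewrite !rmorphD !rmorphN /=; split; last by field.
  lra.
Qed.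

Lemma strip_real (ti tj tk si sj sk : R) :
  0 <= ti <= w -> 0 <= tj <= w -> 0 <= tk <= w ->
  (si - sj) ^+ 2 + (ti - tj) ^+ 2 = 1 ->
  (sj - sk) ^+ 2 + (tj - tk) ^+ 2 = 1 ->
  (si - sk) ^+ 2 + (ti - tk) ^+ 2 = 1 ->
  (ti = 0 \/ ti = w) /\ (tj = 0 \/ tj = w) /\ (tk = 0 \/ tk = w).
Proof.
move=> /andP[hi1 hi2] /andP[hj1 hj2] /andP[hk1 hk2] d1 d2 d3.
have w2 : w ^+ 2 = 3 / 4 by rewrite expr_div_n sqrt3_sq; field.
have wp := w_gt0.
set A := sj - si; set B := sk - sj; set x := tj - ti; set y := tk - tj.
have eA : A ^+ 2 = 1 - x ^+ 2 by rewrite /A /x; nra.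
have eB : B ^+ 2 = 1 - y ^+ 2 by rewrite /B /y; nra.
have eAB : A * B = - 1 / 2 - x * y by rewrite /A /B /x /y; nra.
have key : x ^+ 2 + x * y + y ^+ 2 = 3 / 4.
  have : (A * B) ^+ 2 = A ^+ 2 * B ^+ 2 by rewrite exprMn.
  rewrite eAB eA eB => h; nra.
have bx : x ^+ 2 <= w ^+ 2 by rewrite /x; nra.
have bye : y ^+ 2 <= w ^+ 2 by rewrite /y; nra.
have bxy : (x + y) ^+ 2 <= w ^+ 2 by rewrite /x /y; nra.
have ext : forall u v : R, 0 <= u -> u <= w -> 0 <= v -> v <= w -> (u - v) ^+ 2 = w ^+ 2 ->
   (u = 0 \/ u = w) /\ (v = 0 \/ v = w).
  move=> u v u1 u2 v1 v2 h.
  have : (u - v - w) * (u - v + w) = 0 by rewrite -subr_sqr h subrr.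
  move/eqP; rewrite mulf_eq0 => /orP[] /eqP h'.
    by split; [right|left]; lra.
  by split; [left|right]; lra.
have c3 : x * y = 0 \/ x + y = 0.
  have [hxy|hxy] := lerP 0 (x * y).
    left; nra.
  right.
  have h1 : y * (x + y) >= 0 by nra.
  have h2 : x * (x + y) >= 0 by nra.
  have : x * y * (x + y) ^+ 2 >= 0 by nra.
  move=> h3; have h4 : (x + y) ^+ 2 <= 0 by nra.
  by apply/eqP; rewrite -sqrf_eq0 eq_le h4 sqr_ge0.
case: c3 => [/eqP|] h.
  rewrite mulf_eq0 in h; case/orP: h => /eqP h.
  - have hy : y ^+ 2 = w ^+ 2 by rewrite w2 -key h; ring.
    have [hk hj] := ext _ _ hk1 hk2 hj1 hj2 hy.
    split; last by [].
    by have -> : ti = tj by rewrite /x in h; lra.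
  - have hx : x ^+ 2 = w ^+ 2 by rewrite w2 -key h; ring.
    have [hj hi] := ext _ _ hj1 hj2 hi1 hi2 hx.
    split => //; split => //.
    by have -> : tk = tj by rewrite /y in h; lra.
have hy' : y = - x by lra.
have hx : x ^+ 2 = w ^+ 2 by rewrite w2 -key hy'; ring.
have [hj hi] := ext _ _ hj1 hj2 hi1 hi2 hx.
split => //; split => //.
by have -> : tk = ti by rewrite /x /y in h; lra.
Qed.


Lemma identify p0 x (sig : R) (M K : int) :
  (tc p0 = 0 \/ tc p0 = w) -> 0 <= tc x -> tc x <= w ->
  sig - 1 / 4 <= sc x -> sc p0 <= sig + 1 ->
  sc x - sc p0 = 3 / 2 * M%:~R -> tc x - tc p0 = w * (M%:~R + 2 * K%:~R) ->
  exists h, x = piter a h p0.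
Proof.
move=> hp t1 t2 hs hs0 eS eT.
have wp := w_gt0.
case: M eS eT => h eS eT; last first.
  exfalso; move: eS; rewrite NegzE intrN => eS.
  have : (1 : R) <= h.+1%:R by rewrite ler1n.
  lra.
have hr : (h%:R + 2 * K%:~R : R) = (h%:Z + 2 * K)%:~R by rewrite intrD intrM.
have pz : ((Posz h)%:~R : R) = h%:R by [].
rewrite pz in eS eT.
rewrite hr in eT.
have b1 : (-1 : R) <= (h%:Z + 2 * K)%:~R.
  have : - w <= w * (h%:Z + 2 * K)%:~R by case: hp => hp; lra.
  move=> hh; nra.
have b2 : (h%:Z + 2 * K)%:~R <= (1 : R).
  have : w * (h%:Z + 2 * K)%:~R <= w by case: hp => hp; lra.
  move=> hh; nra.
have b1' : (-1 <= h%:Z + 2 * K)%R by rewrite -(ler_int R).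
have b2' : (h%:Z + 2 * K <= 1)%R by rewrite -(ler_int R).
have [hs' ht'] := piter_coords p0 h hp.
exists h; apply: eq_coords; first by rewrite hs'; lra.
rewrite ht'.
have : (h%:Z + 2 * K = 0 /\ ~~ odd h) \/ (h%:Z + 2 * K = 1 /\ odd h) \/
       (h%:Z + 2 * K = -1 /\ odd h) by lia.
case=> [[e o]|[[e o]|[e o]]]; rewrite e in eT.
- by rewrite (negbTE o); lra.
- by rewrite o; case: hp => hp; rewrite hp in eT *; lra.
- by rewrite o; case: hp => hp; rewrite hp in eT *; lra.
Qed.


Definition Kset (sig : R) : set (pt R) :=
  [set x | (0 <= tc x /\ tc x <= w) /\ sig - 1 / 4 <= sc x].

Lemma conv_sub (S C : set (pt R)) : Defs.convex_set C -> S `<=` C -> Defs.conv S `<=` C.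
Proof. by move=> cC SC x; apply. Qed.

Lemma conv_in (S : set (pt R)) x : S x -> Defs.conv S x.
Proof. by move=> Sx C _; apply. Qed.

Lemma Kconvex sig : Defs.convex_set (Kset sig).
Proof.
move=> x y t [[x1 x2] x3] [[y1 y2] y3] /andP[t0 t1].
rewrite /Kset /= tc_add sc_add !tc_scale !sc_scale.
split; first split; nra.
Qed.

Lemma lvl (x y : nat) : (x%:R : R) <= y%:R + 4 / 3 -> (x <= y.+1)%N.
Proof.
move=> h; rewrite -ltnS -(ltr_nat R) -addn2 natrD; lra.
Qed.

Lemma dist_sc p q : dist p q = 1 -> - 1 <= sc p - sc q <= 1.
Proof.
move=> /dist_coords h; have h2 := sqr_ge0 (tc p - tc q).
have hu : (sc p - sc q) ^+ 2 <= 1 by lra.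
apply/andP; split; nra.
Qed.

Arguments Sigma_tc {x}.
Arguments dist_coords {p q}.
Arguments dist_sc {p q}.
Arguments strip_real {ti tj tk si sj sk}.

Lemma lab_diff x p0 : onL1 x -> onL1 p0 -> exists M K : int,
  sc x - sc p0 = 3 / 2 * M%:~R /\ tc x - tc p0 = w * (M%:~R + 2 * K%:~R).
Proof.
move=> /L1_coords [m [k [h1 h2]]] /L1_coords [m0 [k0 [h3 h4]]].
exists (m - m0), (k - k0); rewrite !intrB h1 h2 h3 h4; split; ring.
Qed.

Lemma lab_diff_sh x p0 (e : pt R) : onL1 x -> onL1 p0 -> exists M K : int,
  sc (padd x e) - sc (padd p0 e) = 3 / 2 * M%:~R /\
  tc (padd x e) - tc (padd p0 e) = w * (M%:~R + 2 * K%:~R).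
Proof.
move=> /lab_diff h /h [M [K [h1 h2]]]; exists M, K.
by rewrite !sc_add !tc_add; split; rewrite -?h1 -?h2; ring.
Qed.

Arguments lab_diff {x p0}.
Arguments lab_diff_sh {x p0}.
Arguments identify {p0 x sig M K}.

Lemma tri_levels (i0 j0 k0 : pt R) (t : tri R) :
  is_tri (i0, j0, k0) -> tri_set (i0, j0, k0) `<=` Sigma a ->
  is_tri t -> tri_set t `<=` SigmaT0 a i0 j0 k0 ->
  exists hi hj hk : nat, t = (piter a hi i0, piter a hj j0, piter a hk k0) /\
     [/\ (hi <= hj.+1)%N, (hj <= hi.+1)%N, (hi <= hk.+1)%N, (hk <= hi.+1)%N &
         ((hj <= hk.+1)%N /\ (hk <= hj.+1)%N)].
Proof.
case: t => [[ti tj] tk].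
move=> [[Li Lj Lk] [dij djk dik]] T0S [[Lti Ltj Ltk] [tdij tdjk tdik]] tS.
rewrite /tri_i /tri_j /tri_k /= in Li Lj Lk dij djk dik Lti Ltj Ltk tdij tdjk tdik.
have vi : Sigma a i0 by apply: T0S; apply: conv_in; left; left.
have vj : Sigma a j0 by apply: T0S; apply: conv_in; left; right.
have vk : Sigma a k0 by apply: T0S; apply: conv_in; right.
have /andP[ti1 ti2] := Sigma_tc vi.
have /andP[tj1 tj2] := Sigma_tc vj.
have /andP[tk1 tk2] := Sigma_tc vk.
have [hi0 [hj0 hk0]] := strip_real (Sigma_tc vi) (Sigma_tc vj) (Sigma_tc vk)
   (dist_coords dij) (dist_coords djk) (dist_coords dik).
have /andP[a1 a2] := dist_sc dij.
have /andP[a3 a4] := dist_sc djk.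
have /andP[a5 a6] := dist_sc dik.
have [sig [s1 [s2 [s3 [s4 [s5 s6]]]]]] : exists sig, sig <= sc i0 /\ sig <= sc j0 /\
    sig <= sc k0 /\ sc i0 <= sig + 1 /\ sc j0 <= sig + 1 /\ sc k0 <= sig + 1.
  have [l1|l1] := lerP (sc i0) (sc j0); have [l2|l2] := lerP (sc i0) (sc k0);
  have [l3|l3] := lerP (sc j0) (sc k0);
  first [ (exists (sc i0); repeat split; lra) | (exists (sc j0); repeat split; lra)
        | (exists (sc k0); repeat split; lra) ].
have inK : forall p0 h, sig <= sc p0 -> (tc p0 = 0 \/ tc p0 = w) -> Kset sig (piter a h p0).
  move=> p0 h sp hp; have [hs ht] := piter_coords p0 h hp.
  have wp := w_gt0.
  have : (0 : R) <= 3 / 2 * h%:R by rewrite mulr_ge0.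
  rewrite /Kset /= hs ht; case: (odd h); case: hp => ->; split; try split; lra.
have SK : SigmaT0 a i0 j0 k0 `<=` Kset sig.
  apply: conv_sub; first exact: Kconvex.
  move=> x [h _]; apply: conv_sub; first exact: Kconvex.
  by move=> y [[->|->]|->]; apply: inK.
have Kti : Kset sig ti by apply: SK; apply: tS; apply: conv_in; left; left.
have Ktj : Kset sig tj by apply: SK; apply: tS; apply: conv_in; left; right.
have Ktk : Kset sig tk by apply: SK; apply: tS; apply: conv_in; right.
case: Kti => [[x1 x2] x3]; case: Ktj => [[y1 y2] y3]; case: Ktk => [[z1 z2] z3].
have [hi Ei] : exists h, ti = piter a h i0.
  have [M [K [e1' e2']]] := lab_diff Lti Li.
  exact: (identify hi0 x1 x2 x3 s4 e1' e2').
have [hj Ej'] : exists h, tj = piter a h j0.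
  case: Ltj => q [Lq Etj]; rewrite Etj in y1 y2 y3 *; case: Lj => q0 [Lq0 Ej].
  have [M [K [e1' e2']]] := lab_diff_sh (e1 R) Lq Lq0.
  rewrite -Ej in e1' e2'.
  exact: (identify hj0 y1 y2 y3 s5 e1' e2').
have [hk Ek'] : exists h, tk = piter a h k0.
  case: Ltk => q [Lq Etk]; rewrite Etk in z1 z2 z3 *; case: Lk => q0 [Lq0 Ek].
  have [M [K [e1' e2']]] := lab_diff_sh (e2 R) Lq Lq0.
  rewrite -Ek in e1' e2'.
  exact: (identify hk0 z1 z2 z3 s6 e1' e2').
exists hi, hj, hk; rewrite Ei Ej' Ek' in tdij tdjk tdik *; split => //.
have [pi1 _] := piter_coords i0 hi hi0.
have [pj1 _] := piter_coords j0 hj hj0.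
have [pk1 _] := piter_coords k0 hk hk0.
have /andP[b1 b2] := dist_sc tdij.
have /andP[b3 b4] := dist_sc tdjk.
have /andP[b5 b6] := dist_sc tdik.
rewrite ?pi1 ?pj1 ?pk1 in b1 b2 b3 b4 b5 b6.
split; [apply: lvl; lra..| split; apply: lvl; lra].
Qed.

End Geo.


Section Ana.
Variable R : realType.

Lemma pi_bnds : (2 : R) <= pi.
Proof. exact: pi_ge2. Qed.

Lemma cos_pi3 : cos (pi / 3) = 1 / 2 :> R.
Proof.
have p2 := pi_bnds.
have hc : 0 < cos (pi / 3) :> R by apply: cos_gt0_pihalf; apply/andP; split; lra.
have e : cos pi = cos (pi / 3 + pi / 3 + pi / 3) :> R by congr cos; field.
rewrite cospi !cosD !sinD in e.
have hs := sin2cos2 (pi / 3 : R).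
move: hc e hs; set c := cos (pi / 3); set s := sin (pi / 3) => hc e hs.
have hint : (s ^+ 2 - (1 - c ^+ 2)) * c = 0 by rewrite hs subrr mul0r.
have h0 : (2 * c - 1) ^+ 2 * (c + 1) = 0 by lra.
move/eqP: h0; rewrite mulf_eq0 sqrf_eq0 => /orP[] /eqP h; lra.
Qed.

Lemma cos_2pi3 : cos (2 * pi / 3) = - 1 / 2 :> R.
Proof.
have -> : 2 * pi / 3 = pi / 3 + pi / 3 :> R by field.
rewrite cosD -expr2 -(expr2 (sin _)) sin2cos2 cos_pi3; by field.
Qed.

Lemma sin_2pi3_sq : sin (2 * pi / 3) ^+ 2 = 3 / 4 :> R.
Proof. rewrite sin2cos2 cos_2pi3; by field. Qed.

Lemma e4pi3 : 4 * pi / 3 = - (2 * pi / 3) + pi *+ 2 :> R.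
Proof. rewrite mulr2n; by field. Qed.

Lemma cos_4pi3 : cos (4 * pi / 3) = - 1 / 2 :> R.
Proof. by rewrite e4pi3 cosD2pi cosN cos_2pi3. Qed.

Lemma sin_4pi3 : sin (4 * pi / 3) = - sin (2 * pi / 3) :> R.
Proof. by rewrite e4pi3 sinD2pi sinN. Qed.

Definition sum3 (x y z : R) : pt R := padd (padd (expi x) (expi y)) (expi z).

Lemma zero_phase X : sqnorm (sum3 X (X + 2 * pi / 3) (X + 4 * pi / 3)) = 0.
Proof.
rewrite /sqnorm /sum3 /expi /padd /= !cosD !sinD cos_2pi3 cos_4pi3 sin_4pi3.
have -> : cos X + (cos X * (-1 / 2) - sin X * sin (2 * pi / 3)) +
     (cos X * (-1 / 2) - sin X * - sin (2 * pi / 3)) = 0 by field.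
have -> : sin X + (sin X * (-1 / 2) + cos X * sin (2 * pi / 3)) +
     (sin X * (-1 / 2) + cos X * - sin (2 * pi / 3)) = 0 by field.
by rewrite expr0n /= addr0.
Qed.

Lemma bound9 x y z : sqnorm (sum3 x y z) <= 9.
Proof.
rewrite /sqnorm /sum3 /expi /padd /=.
have hx := cos2Dsin2 x; have hy := cos2Dsin2 y; have hz := cos2Dsin2 z.
have := sqr_ge0 (cos x - cos y); have := sqr_ge0 (cos y - cos z);
have := sqr_ge0 (cos x - cos z); have := sqr_ge0 (sin x - sin y);
have := sqr_ge0 (sin y - sin z); have := sqr_ge0 (sin x - sin z).
nra.
Qed.

Lemma sqnorm_ge0 (p : pt R) : 0 <= sqnorm p.
Proof. by rewrite /sqnorm addr_ge0 // sqr_ge0. Qed.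

Lemma key_d0 (A B : R) (b1 b2 b3 : bool) :
  sqnorm (sum3 (if b1 then B else A) ((if b2 then B else A) + 2 * pi / 3)
               ((if b3 then B else A) + 4 * pi / 3))
  <= (cos B - cos A) ^+ 2 + (sin B - sin A) ^+ 2.
Proof.
have hs := sin_2pi3_sq.
set s := sin (2 * pi / 3) in hs.
have hint : (s ^+ 2 - 3 / 4) * ((cos B - cos A) ^+ 2 + (sin B - sin A) ^+ 2) = 0.
  by rewrite hs subrr mul0r.
rewrite /sqnorm /sum3 /expi /padd /= !cosD !sinD cos_2pi3 cos_4pi3 sin_4pi3 -/s.
have g1 := sqr_ge0 (cos B - cos A); have g2 := sqr_ge0 (sin B - sin A).
case: b1; case: b2; case: b3 => /=; lra.
Qed.

Lemma lip (f df : R -> R) : (forall x : R, is_derive x (1 : R) f (df x)) -> continuous f ->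
  (forall x, `|df x| <= 1) -> forall x y : R, `|f y - f x| <= `|y - x|.
Proof.
move=> hd hc hb x y.
wlog xy : x y / x <= y.
  move=> W; case/orP: (le_total x y) => h; first exact: W.
  by rewrite (distrC (f y)) (distrC y); apply: W.
have [c _ E] := MVT_segment xy (fun z _ => hd z) (continuous_subspaceT hc).
rewrite E normrM; apply: ler_piMl => //.
Qed.

Lemma expi_lip (X Y : R) : (cos Y - cos X) ^+ 2 + (sin Y - sin X) ^+ 2 <= 2 * (Y - X) ^+ 2.
Proof.
have n1 := real_normK (num_real (cos Y - cos X)).
have n2 := real_normK (num_real (sin Y - sin X)).
have n3 := real_normK (num_real (Y - X)).
have p1 := normr_ge0 (cos Y - cos X).
have p2 := normr_ge0 (sin Y - sin X).
have b1 : `|cos Y - cos X| <= `|Y - X|.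
  apply: (@lip cos (fun z => - sin z)).
  - exact: continuous_cos.
  - by move=> z; rewrite normrN; exact: sin_max.
have b2 : `|sin Y - sin X| <= `|Y - X|.
  apply: (@lip sin cos).
  - exact: continuous_sin.
  - by move=> z; exact: cos_max.
nra.
Qed.


Lemma Nneq0 (N : nat) : (0 < N)%N -> (N%:R : R) != 0.
Proof. by move=> hN; rewrite pnatr_eq0 -lt0n. Qed.

Arguments Nneq0 {N}.

Lemma tl_ge (N m : nat) (th0 c : R) (h : nat) : (0 < N)%N -> (N <= h)%N ->
  theta_interp N m th0 c h = 2 * pi * m%:R + c.
Proof.
move=> hN hh; rewrite /theta_interp; case: leqP => // h2.
have -> : h = N by apply/eqP; rewrite eqn_leq h2 hh.
rewrite divff ?Nneq0 //; ring.
Qed.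

Lemma tl_shift (N m : nat) (th0 c : R) (h : nat) :
  theta_interp N m (th0 + c) c h = theta_interp N m th0 0 h + c.
Proof. by rewrite /theta_interp; case: ifP => _; ring. Qed.

Lemma tl_step (N m : nat) (th0 : R) (h : nat) : (0 < N)%N -> (h < N)%N ->
  theta_interp N m th0 0 h.+1 - theta_interp N m th0 0 h = (2 * pi * m%:R - th0) / N%:R.
Proof.
move=> hN hh; rewrite /theta_interp hh (ltnW hh) -addn1 natrD.
have := Nneq0 hN; move=> nz; by field.
Qed.

Lemma key_lv (phi : nat -> R) (H l1 l2 l3 : nat) :
  (l1 = H \/ l1 = H.+1) -> (l2 = H \/ l2 = H.+1) -> (l3 = H \/ l3 = H.+1) ->
  sqnorm (sum3 (phi l1) (phi l2 + 2 * pi / 3) (phi l3 + 4 * pi / 3))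
  <= (cos (phi H.+1) - cos (phi H)) ^+ 2 + (sin (phi H.+1) - sin (phi H)) ^+ 2.
Proof.
have K := key_d0 (phi H) (phi H.+1).
by case=> ->; case=> ->; case=> ->;
  first [exact: (K false false false) | exact: (K false false true)
        | exact: (K false true false) | exact: (K false true true)
        | exact: (K true false false) | exact: (K true false true)
        | exact: (K true true false) | exact: (K true true true)].
Qed.

Definition S3 (N m : nat) (thi thj thk : R) (l1 l2 l3 : nat) :=
  sqnorm (sum3 (theta_interp N m thi 0 l1) (theta_interp N m thj (2 * pi / 3) l2)
               (theta_interp N m thk (4 * pi / 3) l3)).

Lemma S3_zero N m thi thj thk H l1 l2 l3 : (0 < N)%N -> (N <= H)%N ->
  (l1 = H \/ l1 = H.+1) -> (l2 = H \/ l2 = H.+1) -> (l3 = H \/ l3 = H.+1) ->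
  S3 N m thi thj thk l1 l2 l3 = 0.
Proof.
move=> hN hH h1 h2 h3.
rewrite /S3 !tl_ge //; last 3 first.
- by case: h3 => ->; rewrite // (leq_trans hH).
- by case: h2 => ->; rewrite // (leq_trans hH).
- by case: h1 => ->; rewrite // (leq_trans hH).
by rewrite addr0 zero_phase.
Qed.

Lemma S3_d0 N m thi H l1 l2 l3 : (0 < N)%N -> (H < N)%N ->
  (l1 = H \/ l1 = H.+1) -> (l2 = H \/ l2 = H.+1) -> (l3 = H \/ l3 = H.+1) ->
  S3 N m thi (thi + 2 * pi / 3) (thi + 4 * pi / 3) l1 l2 l3 <=
    2 * ((2 * pi * m%:R - thi) / N%:R) ^+ 2.
Proof.
move=> hN hH h1 h2 h3.
rewrite /S3 !tl_shift.
apply: le_trans (@key_lv (theta_interp N m thi 0) H l1 l2 l3 h1 h2 h3) _.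
rewrite -(@tl_step N m thi H hN hH).
exact: expi_lip.
Qed.

Lemma S3_9 N m thi thj thk l1 l2 l3 : S3 N m thi thj thk l1 l2 l3 <= 9.
Proof. exact: bound9. Qed.

Lemma esum_cover (T : choiceType) (S : set T) (f : T -> R) (E : nat -> T) (M : nat) (B : R) :
  (forall t, 0 <= f t) -> 0 <= B -> (forall t, S t -> exists n, E n = t) ->
  (forall n, f (E n) <= if (n < M)%N then B else 0) ->
  (\esum_(t in S) (f t)%:E <= (M%:R * B)%:E)%E.
Proof.
move=> f0 B0 cov fb.
have [code hc] : {code : T -> nat & forall t, S t -> E (code t) = t}.
  apply: (@choice T nat (fun t n => S t -> E n = t)) => t.
  case: (pselect (S t)) => [/cov [n hn]|nS]; first by exists n.
  by exists 0%N.
have -> : (\esum_(t in S) (f t)%:E = \esum_(t in S) (f (E (code t)))%:E)%E.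
  by apply: eq_esum => t St; rewrite hc.
rewrite -(esum_image S code (fun n => (f (E n))%:E)); last first.
  by move=> x y /set_mem Sx /set_mem Sy exy; rewrite -(hc x Sx) -(hc y Sy) exy.
apply: (@le_trans _ _ (\esum_(n in [set: nat]) ((if (n < M)%N then B else 0)%:E))%E).
  rewrite esum_mkcond; apply: le_esum => n _.
  case: ifP => _; first by rewrite lee_fin.
  by rewrite lee_fin; case: ifP.
rewrite (_ : (\esum_(n in [set: nat]) ((if (n < M)%N then B else 0)%:E))%E =
             (\esum_(n in `I_M) B%:E)%E); last first.
  rewrite [RHS]esum_mkcond; apply: eq_esum => n _.
  have -> : (n \in `I_M) = (n < M)%N.
    by apply/idP/idP => [/set_mem //|h]; apply/mem_set.
  by case: ifP.
rewrite esum_fset; last 2 first.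
- exact: finite_II.
- by move=> i _; rewrite lee_fin.
rewrite -fsbig_ord sumEFin sumr_const card_ord mulr_natl.
by [].
Qed.

End Ana.


Arguments S3 {R}. Arguments sum3 {R}. Arguments sqnorm_ge0 {R}.
Arguments tri_levels {R a}. Arguments S3_zero {R}. Arguments S3_d0 {R}. Arguments S3_9 {R}.

Lemma encode (hi hj hk : nat) : (hi <= hj.+1)%N -> (hj <= hi.+1)%N -> (hi <= hk.+1)%N ->
  (hk <= hi.+1)%N -> (hj <= hk.+1)%N -> (hk <= hj.+1)%N ->
  exists n, (n %/ 8 + n %% 2 = hi /\ n %/ 8 + (n %/ 2) %% 2 = hj /\ n %/ 8 + (n %/ 4) %% 2 = hk)%N.
Proof.
move=> b1 b2 b3 b4 b5 b6.
exists (8 * minn hi (minn hj hk) + (hi - minn hi (minn hj hk)) + 2 * (hj - minn hi (minn hj hk))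
        + 4 * (hk - minn hi (minn hj hk)))%N.
split; [lia | split; lia].
Qed.

Lemma F1tri_E (R : realType) (v : pt R -> pt R) x y z :
  F1tri v (x, y, z) = sqnorm (padd (padd (v x) (v y)) (v z)).
Proof. by []. Qed.

Lemma F1v_bound (R : realType) (a : nat) (i0 j0 k0 : pt R) (thi thj thk : R) (N m : nat)
   (v : pt R -> pt R) (B : R) :
  (1 <= a <= 3)%N -> is_tri (i0, j0, k0) -> tri_set (i0, j0, k0) `<=` Sigma a -> (0 < N)%N ->
  is_interp a i0 j0 k0 thi thj thk N m v -> 0 <= B ->
  (forall H l1 l2 l3, (H < N)%N -> (l1 = H \/ l1 = H.+1) -> (l2 = H \/ l2 = H.+1) ->
     (l3 = H \/ l3 = H.+1) -> S3 N m thi thj thk l1 l2 l3 <= B) ->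
  (F1 v (SigmaT0 a i0 j0 k0) <= ((8 * N)%N%:R * B)%:E)%E.
Proof.
move=> ha T0 T0S hN hv B0 hB.
pose E n : tri R := (piter a (n %/ 8 + n %% 2) i0, piter a (n %/ 8 + (n %/ 2) %% 2) j0,
                     piter a (n %/ 8 + (n %/ 4) %% 2) k0).
apply: (@esum_cover R _ _ _ E).
- by move=> t; exact: sqnorm_ge0.
- exact: B0.
- move=> t [Tt St].
  have [hi [hj [hk [-> [b1 b2 b3 b4 [b5 b6]]]]]] := tri_levels ha _ _ _ _ T0 T0S Tt St.
  have [n [e1 [e2 e3]]] := encode _ _ _ b1 b2 b3 b4 b5 b6.
  by exists n; rewrite /E e1 e2 e3.
- move=> n.
  have [v1 _ _] := hv (n %/ 8 + n %% 2)%N.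
  have [_ v2 _] := hv (n %/ 8 + (n %/ 2) %% 2)%N.
  have [_ _ v3] := hv (n %/ 8 + (n %/ 4) %% 2)%N.
  have -> : F1tri v (E n) = S3 N m thi thj thk (n %/ 8 + n %% 2) (n %/ 8 + (n %/ 2) %% 2)
       (n %/ 8 + (n %/ 4) %% 2).
    by rewrite /E F1tri_E v1 v2 v3.
  case: ltnP => hn.
    apply: (hB (n %/ 8)%N); lia.
  rewrite (@S3_zero R N m thi thj thk (n %/ 8)%N) //; lia.
Qed.

Lemma sum3_zero (R : realType) (x y z : R) : sqnorm (sum3 x y z) = 0 ->
  cos (y - x) = - 1 / 2 /\ cos (z - y) = - 1 / 2.
Proof.
rewrite /sqnorm /sum3 /expi /padd /= => h.
have h1 : (cos x + cos y + cos z) ^+ 2 = 0.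
  by apply/eqP; rewrite eq_le sqr_ge0 andbT; have := sqr_ge0 (sin x + sin y + sin z); lra.
have h2 : (sin x + sin y + sin z) ^+ 2 = 0 by lra.
move: h1 h2 => /eqP; rewrite sqrf_eq0 => /eqP h1 /eqP; rewrite sqrf_eq0 => /eqP h2.
have cx := cos2Dsin2 x; have cy := cos2Dsin2 y; have cz := cos2Dsin2 z.
rewrite !cosB; split.
- have ez : cos z = - (cos x + cos y) by lra.
  have es : sin z = - (sin x + sin y) by lra.
  rewrite ez es in cz; nra.
- have ez : cos x = - (cos y + cos z) by lra.
  have es : sin x = - (sin y + sin z) by lra.
  rewrite ez es in cx; nra.
Qed.

Lemma ang_eq (R : realType) (x : R) : `|x - 2 * pi / 3| <= 1 / 4 -> cos x = - 1 / 2 ->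
  x = 2 * pi / 3.
Proof.
rewrite ler_norml => /andP[h1 h2] hc.
have p2 := @pi_ge2 R.
apply: cos_inj; rewrite ?hc ?cos_2pi3 //; rewrite in_itv /=; apply/andP; split; lra.
Qed.

Theorem lemma4p5 (R : realType) (a : nat) (i0 j0 k0 : pt R) (u : pt R -> pt R)
    (thi thj thk : R) :
  (1 <= a <= 3)%N ->
  is_tri (i0, j0, k0) ->
  tri_set (i0, j0, k0) `<=` Sigma a ->
  (forall p, onL p -> on_S1 (u p)) ->
  thi - pi <= thj < thi + pi ->
  thj - pi <= thk < thj + pi ->
  u i0 = expi thi -> u j0 = expi thj -> u k0 = expi thk ->
  `|thj - thi - 2 * pi / 3| <= 1 / 4 ->
  `|thk - thj - 2 * pi / 3| <= 1 / 4 ->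
  exists C : R, 0 < C /\
    forall (N m : nat) (v : pt R -> pt R),
      (1 <= N)%N ->
      `|thi| + 2 * pi <= 2 * pi * m%:R ->
      (forall p, onL p -> SigmaT0 a i0 j0 k0 p -> on_S1 (v p)) ->
      is_interp a i0 j0 k0 thi thj thk N m v ->
      (F1 v (SigmaT0 a i0 j0 k0) <=
         C%:E * ((N%:R)%:E * F1 u (tri_set (i0, j0, k0)) + (m%:R ^+ 2 / N%:R)%:E))%E.
Proof.
move=> ha T0 T0S _ _ _ ui uj uk dj dk.
have p2 := @pi_ge2 R.
set c0 := sqnorm (sum3 thi thj thk).
have c0ge : 0 <= c0 by exact: sqnorm_ge0.
have F1u_ge : (c0%:E <= F1 u (tri_set (i0, j0, k0)))%E.
  rewrite /F1; apply: esum_ge; exists [set (i0, j0, k0)].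
    split; first exact: finite_set1.
    by move=> t -> ; split => //.
  by rewrite fsbig_set1 F1tri_E ui uj uk.
have F1u0 : (0 <= F1 u (tri_set (i0, j0, k0)))%E.
  by apply: esum_ge0 => t _; rewrite lee_fin sqnorm_ge0.
have [c0pos|c0le] := ltrP 0 c0.
- exists (72 / c0); split; first by rewrite divr_gt0.
  move=> N m v hN hm _ hv.
  have hb := @F1v_bound R a i0 j0 k0 thi thj thk N m v 9 ha T0 T0S hN hv
    ltac:(lra) (fun H l1 l2 l3 _ _ _ _ => S3_9 N m thi thj thk l1 l2 l3).
  apply: le_trans hb _.
  have Np : (0 : R) < N%:R by rewrite ltr0n.
  have h1 : ((N%:R * c0)%:E <= (N%:R)%:E * F1 u (tri_set (i0, j0, k0)) +
               (m%:R ^+ 2 / N%:R)%:E)%E.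
    have h1a : ((N%:R * c0)%:E <= (N%:R)%:E * F1 u (tri_set (i0, j0, k0)))%E.
      by rewrite EFinM lee_wpmul2l // lee_fin ltW.
    have g0 : ((0:R)%:E <= (m%:R ^+ 2 / N%:R)%:E)%E by rewrite lee_fin divr_ge0 // ?sqr_ge0 // ltW.
    exact: le_trans h1a (leeDl _ g0).
  apply: le_trans (lee_wpmul2l _ h1); last by rewrite lee_fin divr_ge0 // ltW.
  rewrite -EFinM lee_fin natrM.
  have -> : 72 / c0 * (N%:R * c0) = 72 * N%:R :> R by field; rewrite gt_eqF.
  lra.
- have c00 : c0 = 0 by apply/eqP; rewrite eq_le c0le c0ge.
  have [cj ck] := @sum3_zero R _ _ _ c00.
  have Ej : thj = thi + 2 * pi / 3.
    have := @ang_eq R _ dj cj; lra.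
  have Ek : thk = thi + 4 * pi / 3.
    have := @ang_eq R _ dk ck; lra.
  exists (256 * pi ^+ 2); split; first by rewrite mulr_gt0 // exprn_gt0 // pi_gt0.
  move=> N m v hN hm _ hv.
  set B := 2 * ((2 * pi * m%:R - thi) / N%:R) ^+ 2.
  rewrite Ej Ek in hv.
  have B0 : 0 <= B by rewrite /B mulr_ge0 // sqr_ge0.
  have hb := @F1v_bound R a i0 j0 k0 thi (thi + 2 * pi / 3) (thi + 4 * pi / 3) N m v B
    ha T0 T0S hN hv B0
    (fun H l1 l2 l3 hH h1 h2 h3 => S3_d0 N m thi H l1 l2 l3 hN hH h1 h2 h3).
  apply: le_trans hb _.
  have Np : (0 : R) < N%:R by rewrite ltr0n.
  have h1 : ((m%:R ^+ 2 / N%:R)%:E <= (N%:R)%:E * F1 u (tri_set (i0, j0, k0)) +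
               (m%:R ^+ 2 / N%:R)%:E)%E.
    by rewrite leeDr // mule_ge0 // lee_fin ltW.
  apply: le_trans (lee_wpmul2l _ h1); last by rewrite lee_fin mulr_ge0 // sqr_ge0.
  rewrite -EFinM lee_fin natrM /B.
  have hth : `|thi| <= 2 * pi * m%:R - 2 * pi by lra.
  move: hth; rewrite ler_norml => /andP[t1 t2].
  set D := 2 * pi * m%:R - thi.
  have D0 : 0 <= D by rewrite /D; nra.
  have D1 : D <= 4 * pi * m%:R by rewrite /D; nra.
  have D2 : D ^+ 2 <= 16 * pi ^+ 2 * m%:R ^+ 2 by nra.
  have -> : 8%:R * N%:R * (2 * (D / N%:R) ^+ 2) = 16 * D ^+ 2 / N%:R :> R.
    by field; rewrite gt_eqF.
  have -> : 256 * pi ^+ 2 * (m%:R ^+ 2 / N%:R) = 16 * (16 * pi ^+ 2 * m%:R ^+ 2) / N%:R :> R.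
    by field; rewrite gt_eqF.
  rewrite ler_pdivrMr // divfK ?gt_eqF //; nra.
Qed.
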